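(* In the binary random graph affiliation mixture model with uniform group priors $\pi_q=1/Q$ and $\alpha\ne\beta$, the parameters $\alpha$, $\beta$ and the number of groups $Q\ge2$ are identifiable from the joint distribution of $K_4$: any two parameter triples $(Q,\alpha,\beta)$, $(Q',\alpha',\beta')$ (with $\alpha\ne\beta$, $\alpha'\ne\beta'$) inducing the same law of $K_4$ are equal.
   Context: Random graph mixture model: nodes have i.i.d. latent groups $Z_i\in\{1,\dots,Q\}$ with $\pi_q=\mathbb P(Z_i=q)$; edge variables $X_{ij}$ ($i<j$) are conditionally independent given all $Z$'s, with law of $X_{ij}$ depending only on $(Z_i,Z_j)$. Binary affiliation model: $X_{ij}\in\{0,1\}$ with $\mathbb P(X_{ij}=1\mid Z_i=q,Z_j=l)=\alpha$ if $q=l$ and $=\beta$ if $q\ne l$. $K_n$ denotes the collection of the $\binom n2$ edge variables among a set of $n$ nodes. *)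

(* Defs.v *)
From HB Require Import structures.
From mathcomp Require Import all_boot all_order all_algebra.
Set Implicit Arguments. Unset Strict Implicit. Unset Printing Implicit Defensive.
Import Order.TTheory GRing.Theory Num.Theory.
Local Open Scope ring_scope.

Definition affil_p (R : rcfType) (Q : nat) (alpha beta : R) (q l : 'I_Q) : R :=
  if q == l then alpha else beta.

Definition bern (R : rcfType) (p : R) (b : bool) : R := if b then p else 1 - p.

(* Probability that the collection K_n of the edge variables X_ij (i < j)
   among n nodes takes the values x i j (only entries with i < j matter),
   under the binary affiliation mixture model with Q groups, uniform prior
   pi_q = 1/Q, and parameters alpha, beta:
     sum over latent assignments z of prod_i pi_{z i} * prod_{i<j} Bern. *)
Definition affil_law (R : rcfType) (n Q : nat) (alpha beta : R)
    (x : 'I_n -> 'I_n -> bool) : R :=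
  \sum_(z : {ffun 'I_n -> 'I_Q})
     (\prod_(i : 'I_n) (Q%:R)^-1) *
     \prod_(i : 'I_n) \prod_(j : 'I_n | (i < j)%N)
        bern (affil_p alpha beta (z i) (z j)) (x i j).

Arguments affil_law {R} n Q alpha beta x.

(* Main.v *)
Require Import Defs.
From HB Require Import structures.
From mathcomp Require Import all_boot all_order all_algebra.
From Stdlib Require Import Ring Field.
Import Order.TTheory GRing.Theory Num.Theory.
Set Implicit Arguments. Unset Strict Implicit. Unset Printing Implicit Defensive.
Local Open Scope ring_scope.
Section S.
Variable R : rcfType.
Definition addR (x y : R) : R := x + y.
Definition mulR (x y : R) : R := x * y.
Definition oppR (x : R) : R := - x.
Definition invR (x : R) : R := x^-1.
Definition zeroR : R := 0.
Definition oneR : R := 1.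
Definition subR (x y : R) : R := x - y.
Definition divR (x y : R) : R := x / y.
Lemma FT : @field_theory (GRing.PzSemiRing.sort R) zeroR oneR addR mulR subR oppR divR invR eq.
Proof. split=> //=.
 split=> //=; rewrite /addR/mulR/oppR/zeroR/oneR/subR;
 [exact: add0r|exact: addrC|exact: addrA|exact: mul1r|exact: mulrC|exact: mulrA|exact: mulrDl|move=> x; exact: subrr].
 by apply/eqP; rewrite oner_eq0.
 move=> p Hp; apply: mulVf; exact/eqP. Qed.
Lemma FT2 : @field_theory (Num.RealClosedField.sort R) zeroR oneR addR mulR subR oppR divR invR eq.
Proof. split=> //=.
 split=> //=; rewrite /addR/mulR/oppR/zeroR/oneR/subR;
 [exact: add0r|exact: addrC|exact: addrA|exact: mul1r|exact: mulrC|exact: mulrA|exact: mulrDl|move=> x; exact: subrr].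
 by apply/eqP; rewrite oner_eq0.
 move=> p Hp; apply: mulVf; exact/eqP. Qed.
Add Field RF2 : FT2.

Lemma addE (x y : R) : x + y = addR x y. Proof. by []. Qed.
Lemma mulE (x y : R) : x * y = mulR x y. Proof. by []. Qed.
Lemma oppE (x : R) : - x = oppR x. Proof. by []. Qed.
Lemma invE (x : R) : x^-1 = invR x. Proof. by []. Qed.
Lemma zeroE : 0 = zeroR :> R. Proof. by []. Qed.
Lemma oneE : 1 = oneR :> R. Proof. by []. Qed.
Lemma expE (x : R) n : x ^+ n.+1 = x ^+ n * x. Proof. exact: exprSr. Qed.
Lemma exp0E (x : R) : x ^+ 0 = 1. Proof. by []. Qed.
Ltac rfield := rewrite /= ?mulr1n ?mulr0n ?expE ?exp0E ?addE ?mulE ?oppE ?invE ?zeroE ?oneE;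
  match goal with |- @eq _ ?a ?b => change (@eq (Num.RealClosedField.sort R) a b) end; field.

Lemma sum_delta (Q : nat) (F : 'I_Q -> R) q : \sum_m (m == q)%:R * F m = F q.
Proof.
rewrite (bigD1 q) //= eqxx mul1r big1 ?addr0 // => m /negbTE ->; by rewrite mul0r.
Qed.

Definition K (Q : nat) (b d : R) (q l : 'I_Q) : R := b + d * (q == l)%:R.

Lemma affilK Q (a b : R) (q l : 'I_Q) : affil_p a b q l = K b (a - b) q l.
Proof. rewrite /affil_p /K; case: eqP => _; rewrite ?mulr1 ?mulr0 ?addr0 //. rfield. Qed.

Lemma Ksym Q b d (q l : 'I_Q) : K b d q l = K b d l q.
Proof. by rewrite /K eq_sym. Qed.

Lemma Kcomp Q b1 d1 b2 d2 (l q : 'I_Q) :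
  \sum_m K b1 d1 l m * K b2 d2 m q = K (Q%:R*b1*b2 + b1*d2 + d1*b2) (d1*d2) l q.
Proof.
rewrite /K.
transitivity (\sum_(m : 'I_Q) (b1*b2 + ((m==q)%:R * (b1*d2) + ((m==l)%:R * (d1*b2) + (m==q)%:R * ((l==q)%:R*d1*d2))))).
  apply: eq_bigr => m _.
  rewrite (eq_sym l m).
  case Emq : (m == q); [move/eqP: Emq => ->|]; rewrite ?eqxx ?(eq_sym q l); rfield.
rewrite !big_split /= !sum_delta sumr_const card_ord.
rewrite -[_ *+ Q]mulr_natr; rfield.
Qed.

Lemma Ksum Q b d (q : 'I_Q) : \sum_l K b d q l = Q%:R * b + d.
Proof.
rewrite /K big_split /= sumr_const card_ord.
under eq_bigr => l _ do rewrite eq_sym mulrC.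
by rewrite sum_delta mulr_natl.
Qed.

Lemma Ktr Q b d : \sum_(q : 'I_Q) K b d q q = Q%:R * (b + d).
Proof. rewrite /K; under eq_bigr => q _ do rewrite eqxx mulr1. by rewrite sumr_const card_ord mulr_natl. Qed.


Definition xof (X : {ffun 'I_4 * 'I_4 -> bool}) : 'I_4 -> 'I_4 -> bool := fun i j => X (i, j).
Definition wgt (c : 'I_4 * 'I_4 -> bool) (p : 'I_4 * 'I_4) (b : bool) : R :=
  if (p.1 < p.2)%N then (if c p then (b:nat)%:R else 1) else ((~~ b) : nat)%:R.
Definition mom Q (a b : R) c := \sum_(X : {ffun 'I_4 * 'I_4 -> bool})
   affil_law 4 Q a b (xof X) * \prod_p wgt c p (X p).

Lemma dprod (F : 'I_4 -> 'I_4 -> R) : \prod_(i : 'I_4) \prod_(j : 'I_4 | (i<j)%N) F i j = \prod_(p : 'I_4 * 'I_4) (if (p.1<p.2)%N then F p.1 p.2 else 1).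
Proof. under eq_bigr => i _ do rewrite big_mkcond. by rewrite pair_big. Qed.

Lemma momE Q (a b : R) c : mom Q a b c = (Q%:R^-1)^+4 * \sum_(z : {ffun 'I_4 -> 'I_Q})
  \prod_(p : 'I_4 * 'I_4) (if (p.1 < p.2)%N && c p then affil_p a b (z p.1) (z p.2) else 1).
Proof.
rewrite /mom /affil_law.
under eq_bigr => X _ do rewrite mulr_suml.
rewrite exchange_big /= mulr_sumr. apply: eq_bigr => z _.
rewrite prodr_const card_ord.
under eq_bigr => X _ do rewrite -mulrA.
rewrite -mulr_sumr. congr (_ * _).
under [\sum__ _]eq_bigr => X _ do rewrite (dprod (fun i j => bern (affil_p a b (z i) (z j)) (xof X i j))) -big_split /=.
under eq_bigr => X _ do under eq_bigr => p _ do rewrite /xof -surjective_pairing.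
rewrite -(bigA_distr_bigA (fun (p : 'I_4*'I_4) (bb : bool) => (if (p.1 < p.2)%N then bern (affil_p a b (z p.1) (z p.2)) bb else 1) * wgt c p bb)).
apply: eq_bigr => p _.
rewrite big_bool /wgt /bern /=.
case: ifP => Hp /=; last by rewrite !mul1r /= mulr0n add0r.
case: (c p) => /=; rfield.
Qed.


Definition o0 : 'I_4 := @Ordinal 4 0 isT.
Definition o1 : 'I_4 := @Ordinal 4 1 isT.
Definition o2 : 'I_4 := @Ordinal 4 2 isT.
Definition o3 : 'I_4 := @Ordinal 4 3 isT.

Lemma sumz Q (F : 'I_Q -> 'I_Q -> 'I_Q -> 'I_Q -> R) :
  \sum_(z : {ffun 'I_4 -> 'I_Q}) F (z o0) (z o1) (z o2) (z o3) =
  \sum_a \sum_b \sum_c \sum_d F a b c d.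
Proof.
rewrite [RHS]pair_big [RHS]pair_big [RHS]pair_big /=.
pose f (t : 'I_Q * 'I_Q * 'I_Q * 'I_Q) : {ffun 'I_4 -> 'I_Q} :=
  [ffun i : 'I_4 => match val i with 0 => t.1.1.1 | 1 => t.1.1.2 | 2 => t.1.2 | _ => t.2 end].
have bf : bijective f.
  exists (fun z : {ffun 'I_4 -> 'I_Q} => (z o0, z o1, z o2, z o3)).
    by case=> [[[a b] c] d]; rewrite /f !ffunE.
  move=> z; apply/ffunP => i; rewrite /f ffunE /=.
  case: i => [[|[|[|[|k]]]] Hi] //=; congr (z _); exact: val_inj.
rewrite (reindex f); last by apply: onW_bij.
by apply: eq_bigr => t _; rewrite /f !ffunE.
Qed.


Lemma sumcQ Q (x : R) : \sum_(d : 'I_Q) x = Q%:R * x.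
Proof. by rewrite sumr_const card_ord mulr_natl. Qed.

Lemma tri Q b d : \sum_(x : 'I_Q) \sum_(y : 'I_Q) \sum_(w : 'I_Q) \sum_(v : 'I_Q)
   (K b d x y * K b d x w * K b d y w) =
  Q%:R * (Q%:R * ((Q%:R * b * (Q%:R*b*b + b*d + d*b) + b * (d*d) + d * (Q%:R*b*b + b*d + d*b)) + d*(d*d))).
Proof.
under eq_bigr => x _ do under eq_bigr => y _ do under eq_bigr => w _ do rewrite sumcQ.
under eq_bigr => x _ do under eq_bigr => y _ do rewrite -mulr_sumr.
under eq_bigr => x _ do under eq_bigr => y _ do under eq_bigr => w _ do rewrite -mulrA [K b d y w]Ksym.
under eq_bigr => x _ do under eq_bigr => y _ do rewrite -mulr_sumr Kcomp.
under eq_bigr => x _ do under eq_bigr => y _ do rewrite [K _ (d*d) x y]Ksym.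
under eq_bigr => x _ do rewrite -mulr_sumr Kcomp.
rewrite -mulr_sumr Ktr.
rfield.
Qed.


Lemma edge Q b d : \sum_(x : 'I_Q) \sum_(y : 'I_Q) \sum_(w : 'I_Q) \sum_(v : 'I_Q)
   K b d x y = Q%:R * (Q%:R * (Q%:R * (Q%:R * b + d))).
Proof.
under eq_bigr => x _ do under eq_bigr => y _ do under eq_bigr => w _ do rewrite sumcQ.
under eq_bigr => x _ do under eq_bigr => y _ do rewrite sumcQ.
under eq_bigr => x _ do rewrite -mulr_sumr -mulr_sumr Ksum.
by rewrite sumcQ.
Qed.

Lemma cyc Q b d : \sum_(x : 'I_Q) \sum_(y : 'I_Q) \sum_(w : 'I_Q) \sum_(v : 'I_Q)
   (K b d x y * K b d x v * K b d y w * K b d w v) =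
  let b2 := Q%:R*b*b + b*d + d*b in let d2 := d * d in
  let b3 := Q%:R*b*b2 + b*d2 + d*b2 in let d3 := d * d2 in
  Q%:R * ((Q%:R*b*b3 + b*d3 + d*b3) + d*d3).
Proof.
transitivity (\sum_(x : 'I_Q) \sum_(y : 'I_Q) \sum_(w : 'I_Q) \sum_(v : 'I_Q)
   (K b d x y * (K b d y w * (K b d w v * K b d v x)))).
  apply: eq_bigr => x _; apply: eq_bigr => y _; apply: eq_bigr => w _; apply: eq_bigr => v _.
  rewrite (Ksym b d x v). rfield.
under eq_bigr => x _ do under eq_bigr => y _ do under eq_bigr => w _ do rewrite -mulr_sumr -mulr_sumr Kcomp.
under eq_bigr => x _ do under eq_bigr => y _ do rewrite -mulr_sumr Kcomp.
under eq_bigr => x _ do rewrite Kcomp.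
rewrite Ktr /=. rfield.
Qed.


Lemma prod4 (H : 'I_4 -> R) : \prod_i H i = H o0 * H o1 * H o2 * H o3.
Proof. rewrite !big_ord_recr big_ord0 /= mul1r. by congr (_ * _ * _ * _); congr H; apply: val_inj. Qed.

Lemma prod16 (G : 'I_4 * 'I_4 -> R) : \prod_p G p = \prod_i \prod_j G (i,j).
Proof. by rewrite pair_big; apply: eq_bigr => -[i j] _. Qed.

Definition c1 (p : 'I_4 * 'I_4) : bool := ((val p.1, val p.2) == (0,1)%N).
Definition c3 (p : 'I_4 * 'I_4) : bool :=
  [|| (val p.1, val p.2) == (0,1)%N, (val p.1, val p.2) == (0,2)%N | (val p.1, val p.2) == (1,2)%N].
Definition c4 (p : 'I_4 * 'I_4) : bool :=
  [|| (val p.1, val p.2) == (0,1)%N, (val p.1, val p.2) == (0,3)%N,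
      (val p.1, val p.2) == (1,2)%N | (val p.1, val p.2) == (2,3)%N].

Lemma m1E Q (a b : R) : mom Q a b c1 =
  (Q%:R^-1)^+4 * \sum_(x : 'I_Q) \sum_(y : 'I_Q) \sum_(w : 'I_Q) \sum_(v : 'I_Q) K b (a-b) x y.
Proof.
rewrite momE; congr (_ * _).
rewrite -(sumz (fun x y _ _ => K b (a-b) x y)). apply: eq_bigr => z _.
rewrite prod16 !prod4 /=. rewrite !mulr1 !mul1r. exact: affilK.
Qed.

Lemma m3E Q (a b : R) : mom Q a b c3 =
  (Q%:R^-1)^+4 * \sum_(x : 'I_Q) \sum_(y : 'I_Q) \sum_(w : 'I_Q) \sum_(v : 'I_Q)
   (K b (a-b) x y * K b (a-b) x w * K b (a-b) y w).
Proof.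
rewrite momE; congr (_ * _).
rewrite -(sumz (fun x y w _ => K b (a-b) x y * K b (a-b) x w * K b (a-b) y w)). apply: eq_bigr => z _.
rewrite prod16 !prod4 /=. rewrite !mulr1 !mul1r. by rewrite !affilK.
Qed.

Lemma m4E Q (a b : R) : mom Q a b c4 =
  (Q%:R^-1)^+4 * \sum_(x : 'I_Q) \sum_(y : 'I_Q) \sum_(w : 'I_Q) \sum_(v : 'I_Q)
   (K b (a-b) x y * K b (a-b) x v * K b (a-b) y w * K b (a-b) w v).
Proof.
rewrite momE; congr (_ * _).
rewrite -(sumz (fun x y w v => K b (a-b) x y * K b (a-b) x v * K b (a-b) y w * K b (a-b) w v)). apply: eq_bigr => z _.
rewrite prod16 !prod4 /=. rewrite !mulr1 !mul1r. by rewrite !affilK.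
Qed.


Lemma mvals Q (a b : R) : (0 < Q)%N ->
  let q := Q%:R in let d := a - b in
  [/\ mom Q a b c1 = b + d / q,
      mom Q a b c3 - (mom Q a b c1)^+3 = d^+3 * (q - 1) / q^+3 &
      mom Q a b c4 - (mom Q a b c1)^+4 = d^+4 * (q - 1) / q^+4].
Proof.
move=> hQ q d.
have hq : q <> 0 by apply/eqP; rewrite pnatr_eq0 -lt0n.
rewrite m1E m3E m4E edge tri cyc /= -/q -/d.
split; rfield; exact: hq.
Qed.


Lemma final (Q Q' : nat) (a b a' b' : R) : (2 <= Q)%N -> (2 <= Q')%N ->
  a != b -> a' != b' ->
  (forall c, mom Q a b c = mom Q' a' b' c) -> [/\ Q = Q', a = a' & b = b'].
Proof.
move=> hQ hQ' hab hab' Hm.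
have [E1 E3 E4] := mvals a b (ltnW hQ).
have [E1' E3' E4'] := mvals a' b' (ltnW hQ').
move: E1 E3 E4 E1' E3' E4'.
rewrite !Hm.
set m1 := mom Q' a' b' c1; set m3 := mom Q' a' b' c3; set m4 := mom Q' a' b' c4.
set q := Q%:R; set q' := Q'%:R; set d := a - b; set d' := a' - b'.
move=> E1 E3 E4 E1' E3' E4'.
have nq : q != 0 by rewrite pnatr_eq0 -lt0n ltnW.
have nq' : q' != 0 by rewrite pnatr_eq0 -lt0n ltnW.
have nq1 : q - 1 != 0.
  by rewrite /q -(subnK (ltnW hQ)) natrD addrK pnatr_eq0 -lt0n subn_gt0.
have nq1' : q' - 1 != 0.
  by rewrite /q' -(subnK (ltnW hQ')) natrD addrK pnatr_eq0 -lt0n subn_gt0.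
have nd : d != 0 by rewrite subr_eq0.
have nd' : d' != 0 by rewrite subr_eq0.
set u := m3 - m1 ^+ 3 in E3 E3'. set v := m4 - m1 ^+ 4 in E4 E4'.
have nv : v != 0.
  by rewrite E4 mulf_neq0 ?invr_neq0 ?expf_neq0 // mulf_neq0 ?expf_neq0.
have nu : u != 0.
  by rewrite E3 mulf_neq0 ?invr_neq0 ?expf_neq0 // mulf_neq0 ?expf_neq0.
have Iu : u ^+ 4 = (q - 1) * v ^+ 3.
  rewrite E3 E4. move/eqP: nq => nq0. rfield. exact: nq0.
have Iu' : u ^+ 4 = (q' - 1) * v ^+ 3.
  rewrite E3' E4'. move/eqP: nq' => nq0. rfield. exact: nq0.
have Eqq : q = q'.
  have : (q - 1) * v ^+ 3 = (q' - 1) * v ^+ 3 by rewrite -Iu -Iu'.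
  move/(mulIf (expf_neq0 3 nv)). by move/(congr1 (fun x => x + 1)); rewrite !subrK.
have EQ : Q = Q' by apply/eqP; rewrite -(eqr_nat R) -/q -/q' Eqq.
have Id : d * u = q * v.
  rewrite E3 E4. move/eqP: nq => nq0. rfield. exact: nq0.
have Id' : d' * u = q' * v.
  rewrite E3' E4'. move/eqP: nq' => nq0. rfield. exact: nq0.
have Edd : d = d'.
  apply: (mulIf nu). by rewrite Id Id' Eqq.
have Ebb : b = b'.
  by move: E1; rewrite E1' -Eqq -Edd => /addIr.
split => //.
by rewrite -(subrK b a) -(subrK b' a') -/d -/d' Edd Ebb.
Qed.

End S.

Theorem corollary3 (R : rcfType) (Q Q' : nat) (alpha beta alpha' beta' : R) :
  (2 <= Q)%N -> (2 <= Q')%N ->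
  0 <= alpha <= 1 -> 0 <= beta <= 1 ->
  0 <= alpha' <= 1 -> 0 <= beta' <= 1 ->
  alpha != beta -> alpha' != beta' ->
  (forall x : 'I_4 -> 'I_4 -> bool,
      affil_law 4 Q alpha beta x = affil_law 4 Q' alpha' beta' x) ->
  [/\ Q = Q', alpha = alpha' & beta = beta'].
Proof.
move=> hQ hQ' _ _ _ _ hab hab' H.
apply: final => // c.
by rewrite /mom; apply: eq_bigr => X _; rewrite H.
Qed.
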